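(* For $n\ge 1$ and $P$ a Dyck $n$-path, the number of long interior inclines in $P$ plus the number of occurrences of $DXD$ in the elevated path $E(P)=UPD$ equals $n-1$.
   Context: A Dyck $n$-path is a path from $(0,0)$ to $(2n,0)$ with $n$ upsteps $U=(1,1)$ and $n$ downsteps $D=(1,-1)$ never going below the $x$-axis, written as a word in $U,D$. An ascent (resp. descent) is a maximal run of consecutive $U$s (resp. $D$s); an incline is an ascent or descent; it is long if it has at least two steps. The first ascent and last descent of a nonempty Dyck path are not interior; all other inclines are interior. A $DXD$ is an occurrence of $DUD$ or $DDD$ as three consecutive steps. $E(P)=UPD$ is obtained by prepending $U$ and appending $D$. *)

(* Defs.v *)
From mathcomp Require Import all_boot.
Set Implicit Arguments. Unset Strict Implicit. Unset Printing Implicit Defensive.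

(* Steps: true = U = (1,1), false = D = (1,-1). A path is a word seq bool. *)
Notation U := true.
Notation D := false.

Definition nU (p : seq bool) : nat := count id p.
Definition nD (p : seq bool) : nat := count negb p.

Definition dyck (n : nat) (p : seq bool) : bool :=
  [&& nU p == n, nD p == n &
      all (fun k => nD (take k p) <= nU (take k p)) (iota 0 (size p).+1)].

(* Run-length decomposition into maximal runs (inclines): each entry is
   (step, length of the run). *)
Fixpoint runs (p : seq bool) : seq (bool * nat) :=
  match p with
  | [::] => [::]
  | b :: q =>
      match runs q with
      | (c, k) :: r => if b == c then (c, k.+1) :: r else (b, 1) :: (c, k) :: r
      | [::] => [:: (b, 1)]
      end
  end.

Definition interior_inclines (p : seq bool) : seq (bool * nat) :=
  let r := runs p in
  take (size r).-2 (behead r).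

Definition long_interior_inclines (p : seq bool) : nat :=
  count (fun r : bool * nat => 2 <= r.2) (interior_inclines p).

Definition num_DXD (p : seq bool) : nat :=
  count (fun i => (nth U p i == D) && (nth U p i.+2 == D)) (iota 0 (size p).-2).

Definition elevate (p : seq bool) : seq bool := U :: rcons p D.

Example ex1 : runs [:: U; U; D; U; D; D] = [:: (U,2); (D,1); (U,1); (D,2)]. Proof. by []. Qed.
Example ex2 : interior_inclines [:: U; U; D; U; D; D] = [:: (D,1); (U,1)]. Proof. by []. Qed.
Example ex3 : long_interior_inclines [:: U;U;D;D;U;D] + num_DXD (elevate [:: U;U;D;D;U;D]) = 2. Proof. by []. Qed.
Example ex4 : long_interior_inclines [:: U;D;U;D;U;D] + num_DXD (elevate [:: U;D;U;D;U;D]) = 2. Proof. by []. Qed.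
Example ex5 : long_interior_inclines [:: U;U;U;D;D;D] + num_DXD (elevate [:: U;U;U;D;D;D]) = 2. Proof. by []. Qed.

(* Main.v *)
Require Import Defs.
From mathcomp Require Import all_boot.
From mathcomp Require Import zify.

Fixpoint XX (p : seq bool) : nat :=
  match p with
  | a :: ((b :: c :: _) as q) => ((a == D) && (c == D)) + XX q
  | _ => 0
  end.

Fixpoint RR (p : seq bool) : nat :=
  match p with
  | a :: ((b :: c :: _) as q) => ((a == D) && (c == U)) + RR q
  | _ => 0
  end.

Lemma numDXD_XX p : num_DXD p = XX p.
Proof.
elim: p => [|a q IH] //.
case: q IH => [|b [|c r]] IH //.
have -> : XX [:: a, b, c & r] = ((a==D)&&(c==D)) + XX [:: b, c & r] by [].
rewrite -IH /num_DXD /=.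
congr (_ + _); rewrite -[iota 1 _]/(iota (1+0) _) iotaDl count_map; apply: eq_count => i.
by [].
Qed.

Lemma XU q : 2 <= size q -> XX (U :: q) = XX q.
Proof. by case: q => [|b [|c r]]. Qed.

Lemma XXc a q : 2 <= size q -> XX (a :: q) = ((a == D) && (nth U q 1 == D)) + XX q.
Proof. by case: q => [|b [|c r]]. Qed.

Lemma RRc a q : 2 <= size q -> RR (a :: q) = ((a == D) && (nth U q 1 == U)) + RR q.
Proof. by case: q => [|b [|c r]]. Qed.

Lemma X_rcons a w : XX (rcons (a :: w) D) + RR (a :: w) = count negb (belast a w).
Proof.
elim: w a => [|b w IH] a; first by [].
case: w IH => [|c w] IH.
  by case: a.
have -> : rcons [:: a, b, c & w] D = a :: rcons [:: b, c & w] D by [].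
rewrite XXc ?size_rcons // RRc //.
have -> : belast a [:: b, c & w] = a :: belast b (c :: w) by [].
have -> : count negb (a :: belast b (c::w)) = ~~ a + count negb (belast b (c::w)) by [].
rewrite -(IH b).
rewrite (_ : nth U (rcons [:: b, c & w] D) 1 = c) // (_ : nth U [:: b, c & w] 1 = c) //.
move: (XX (rcons [:: b, c & w] D)) (RR [:: b, c & w]) => x y.
by clear IH; case: a; case: c => /=; lia.
Qed.

Lemma runsE b q : runs (b :: q) = match runs q with
      | (c, k) :: r => if b == c then (c, k.+1) :: r else (b, 1) :: (c, k) :: r
      | [::] => [:: (b, 1)]
      end.
Proof. by []. Qed.

Lemma runs_cons c q : exists k r, runs (c :: q) = (c, k.+1) :: r /\
   (0 < k) = (if q is d :: _ then d == c else false).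
Proof.
elim: q c => [|d q IH] c; first by exists 0, [::].
have [k [r [Hr Hk]]] := IH d.
rewrite runsE Hr.
case: eqP => [->|ne].
  by exists k.+1, r; split => //; rewrite eqxx.
exists 0, ((d, k.+1) :: r); split => //.
by case: eqP => // E; case: ne.
Qed.

Lemma runs_size2 c q : (~~ c) \in q -> 2 <= size (runs (c :: q)).
Proof.
elim: q c => [|d q IH] c //.
have [k [r [Hr Hk]]] := runs_cons d q.
rewrite runsE Hr inE => H.
case: (c =P d) => [E|ne] /=; last by [].
subst d; have : ~~ c \in q by clear Hk Hr IH; move: H; case: c.
by move/IH; rewrite Hr.
Qed.

Lemma runs_size1 c q : (~~ c) \notin q -> size (runs (c :: q)) = 1.
Proof.
elim: q c => [|d q IH] c //.
have [k [r [Hr Hk]]] := runs_cons d q.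
rewrite runsE Hr inE negb_or => /andP [H1 H2].
have Edc : c == d by clear -H1; case: c d H1 => [] [].
rewrite Edc; move/eqP: Edc => Edc; subst d.
by move: (IH c H2); rewrite Hr.
Qed.

Lemma R0 w : U \notin w -> RR w = 0.
Proof.
elim: w => [|a q IH] //.
case: q IH => [|b [|c r]] IH // H.
rewrite RRc // IH /=; last by move: H; rewrite !inE !negb_or => /andP[].
move: H; rewrite !inE !negb_or => /and3P [_ _ /andP [Hc _]].
by clear IH; case: c Hc; case: a.
Qed.

Lemma mainL w : U \in w -> last U w = D ->
  long_interior_inclines w + ((nth U w 0 == D) && (nth U w 1 == D)) = RR w.
Proof.
elim: w => [|b q IH] //.
case: q IH => [|c q'] IH.
  by case: b.
move=> HU Hl; rewrite [last _ _]/= in Hl.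
case: (boolP (U \in c :: q')) => HUq.
  have Hcq : ~~ c \in q'.
    clear IH; case: c HU Hl HUq => HU Hl HUq.
      by have := mem_last U q'; rewrite /= in Hl; rewrite Hl inE.
    by move: HUq; rewrite !inE.
  case: q' IH HU Hl Hcq HUq => [|d q''] IH HU Hl Hcq HUq //.
  have [k [r [Hr Hk]]] := runs_cons c (d :: q'').
  have IHq := IH HUq Hl.
  have Hs := @runs_size2 _ _ Hcq.
  rewrite Hr /= in Hs Hk.
  rewrite (RRc b) // -IHq.
  rewrite /long_interior_inclines /interior_inclines runsE !Hr.
  rewrite [nth _ _ 1]/= [nth _ _ 0]/= [nth _ _ 1]/= [nth _ _ 0]/=.
  case: (b =P c) => [Ebc|Nbc].
    subst b; rewrite /=; move: (count _ _) => C.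
    by destruct c, d => /=; lia.
  case: r Hr Hs => [|x r] Hr Hs //.
  rewrite /= ltnS Hk; move: (count _ _) => C.
  have Eb : b = ~~ c by destruct b, c => //; case: Nbc.
  subst b.
  by destruct c, d => /=; lia.
have Ec : c = D by destruct c => //; move: HUq; rewrite inE eqxx.
subst c.
have Eb : b = U by destruct b => //; move: HU HUq; rewrite in_cons => /orP[] // ->.
subst b.
case: q' IH HU Hl HUq => [|d q''] IH HU Hl HUq.
  by [].
rewrite RRc // R0 //.
have [k [r [Hr Hk]]] := runs_cons D (d :: q'').
have Hs := @runs_size1 D (d :: q'').
rewrite Hr /= in Hs.
rewrite /long_interior_inclines /interior_inclines runsE Hr /=.
case: r Hr Hs => [|x r] Hr Hs //=.
by have := Hs; rewrite inE negb_or in HUq; case/andP: HUq => _ H; move/(_ H).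
Qed.

Theorem mainTheorem5 (n : nat) (P : seq bool) :
  1 <= n -> dyck n P ->
  long_interior_inclines P + num_DXD (elevate P) = n.-1.
Proof.
move=> n1 /and3P [/eqP HnU /eqP HnD /allP Hpre].
case/lastP: P HnU HnD Hpre => [|s x] HnU HnD Hpre.
  by rewrite /nU /= in HnU; subst n.
have Hx : x = D.
  destruct x => //.
  have := Hpre (size s).
  rewrite mem_iota size_rcons add0n ltnS leqW // => /(_ isT).
  rewrite -cats1 take_size_cat // /nD /nU.
  move: HnU HnD; rewrite /nU /nD -!cats1 !count_cat /=. lia.
subst x.
case: s HnU HnD Hpre => [|a s'] HnU HnD Hpre.
  by rewrite /nU /= in HnU; subst n.
have Ha : a = U.
  destruct a => //.
  have := Hpre 1.
  by rewrite mem_iota size_rcons /= take0 => /(_ isT).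
subst a.
have HL := @mainL (rcons (U :: s') D).
rewrite last_rcons /= in HL.
have HL2 := HL isT erefl.
rewrite addn0 in HL2.
rewrite HL2 numDXD_XX /elevate XU; last by rewrite size_rcons /= size_rcons.
have HX := X_rcons U (rcons s' D).
rewrite belast_rcons in HX.
rewrite [rcons (U :: s') D]/= addnC HX.
move: HnD; rewrite /nD -cats1 count_cat /=. lia.
Qed.
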